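(* Let $\mathcal F$ be a saturated fusion system over a finite $p$-group $S$ and $R$ a commutative ring with $1$. The Mackey algebra $\mu_R(\mathcal F)$ has an $R$-basis $\mathcal B=\bigsqcup_{A,B\le S}\mathcal B_{(A,B)}$, where $$\mathcal B_{(A,B)}=\bigsqcup_{\substack{C\le A\\ \text{up to }A\text{-conjugacy}}}\ \bigsqcup_{\varphi\in[\operatorname{Aut}_B(B)\backslash\operatorname{Hom}_{\mathcal F}(C,B)/\operatorname{Aut}_A(C)]}\{I^B_{\overline\varphi(C)}c_{\overline\varphi}R^A_C\}.$$ In particular $\mu_R(\mathcal F)$ is finitely generated as an $R$-module.
   Context: A fusion system $\mathcal F$ over $S$: category with objects the subgroups of $S$, morphisms injective homomorphisms, containing all conjugations $x\mapsto sxs^{-1}$ ($s\in S$), with each morphism's isomorphism onto its image and its inverse in $\mathcal F$; saturated. $\operatorname{Aut}_T(P)=\{c_x|_P:x\in N_T(P)\}$, $c_x(y)=xyx^{-1}$. $[\operatorname{Aut}_B(B)\backslash\operatorname{Hom}_{\mathcal F}(C,B)/\operatorname{Aut}_A(C)]$ denotes a set of representatives of the double cosets (post-composition by $\operatorname{Aut}_B(B)$, pre-composition by $\operatorname{Aut}_A(C)$). $\overline\varphi$ is the class of $\varphi$ in $\operatorname{Aut}_B(B)\backslash\operatorname{Hom}_{\mathcal F}(C,B)$. Mackey algebra: for $H\le K\le S$, $R^K_H$ is the isomorphism class of the $(H,K)$-biset $(H\times K)/\Delta(H)$, $I^K_H$ that of the $(K,H)$-biset $(K\times H)/\Delta(H)$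 ($\Delta(H)=\{(h,h)\}$), and for an isomorphism $\varphi:H\to\varphi(H)$ in $\mathcal F$, $c_\varphi$ is the class of the $(\varphi(H),H)$-biset $(\varphi(H)\times H)/\{(\varphi(h),h)\}$ (actions $a\cdot(x,y)\cdot b=(ax,b^{-1}y)$). The product of the class of an $(H,J)$-biset $X$ and of a $(J',K)$-biset $Y$ is the class of $X\times_JY$ if $J=J'$ and $0$ otherwise. $\mu_{\mathbb Z}(\mathcal F)$ is the Grothendieck group of the semiring (addition = disjoint union, with a zero element) generated by all $I^K_H,R^K_H,c_\varphi$, and $\mu_R(\mathcal F)=R\otimes_{\mathbb Z}\mu_{\mathbb Z}(\mathcal F)$. For $\varphi\in\operatorname{Hom}_{\mathcal F}(C,B)$, $I^B_{\overline\varphi(C)}c_{\overline\varphi}:=I^B_{\varphi(C)}c_\varphi$ with $\varphi$ viewed as an isomorphism onto its image (this depends only on $\overline\varphi$). *)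

(* Defs.v *)
From HB Require Import structures.
From mathcomp Require Import all_boot all_order all_algebra all_fingroup.
Set Implicit Arguments. Unset Strict Implicit. Unset Printing Implicit Defensive.
Import GRing.Theory.
Local Open Scope group_scope.

Section FusionMackey.
Variable gT : finGroupType.
Implicit Types P Q T A B C H K : {set gT}.

(* A map P -> Q is stored as the finite function equal to it on P and to 1 off P. *)
Definition restrict P (f : gT -> gT) : {ffun gT -> gT} :=
  [ffun x => if x \in P then f x else 1].

(* c_s restricted to P : x |-> s x s^-1  (in MathComp, x ^ y = y^-1 x y) *)
Definition conjmap P (s : gT) : {ffun gT -> gT} := restrict P (fun x => x ^ s^-1).

Definition finv P (f : {ffun gT -> gT}) : {ffun gT -> gT} :=
  restrict (f @: P) (fun y => odflt 1 [pick x in P | f x == y]).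

Definition injhom P Q (f : {ffun gT -> gT}) : bool :=
  [&& f @: P \subset Q,
      [forall x in P, forall y in P, f (x * y) == f x * f y],
      [forall x in P, forall y in P, (f x == f y) ==> (x == y)] &
      [forall x, (x \notin P) ==> (f x == 1)]].

(* a fusion system is a set of triples (P, Q, phi) with phi in Hom_F(P,Q) *)
Definition fus_triple := ({set gT} * {set gT} * {ffun gT -> gT})%type.

Definition is_fusion_system (S : {set gT}) (F : {set fus_triple}) : Prop :=
  [/\ (forall P Q f, (P, Q, f) \in F ->
         [/\ group_set P, group_set Q, P \subset S, Q \subset S & injhom P Q f]),
      (forall P Q s, group_set P -> group_set Q -> P \subset S -> Q \subset S ->
         s \in S -> P :^ s^-1 \subset Q -> (P, Q, conjmap P s) \in F),
      (forall P Q T f g, (P, Q, f) \in F -> (Q, T, g) \in F ->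
         (P, T, restrict P (fun x => g (f x))) \in F) &
      (forall P Q f, (P, Q, f) \in F ->
         (P, f @: P, f) \in F /\ (f @: P, P, finv P f) \in F)].

Definition HomF (F : {set fus_triple}) P Q : {set {ffun gT -> gT}} :=
  [set f | (P, Q, f) \in F].
Definition AutF (F : {set fus_triple}) P := HomF F P P.
Definition AutS (S : {set gT}) P : {set {ffun gT -> gT}} :=
  [set conjmap P s | s in 'N_S(P)].

Definition Fconj (F : {set fus_triple}) P Q : bool :=
  [exists f, ((P, Q, f) \in F) && (f @: P == Q)].

Definition fully_normalized (S : {set gT}) (F : {set fus_triple}) P : Prop :=
  forall Q, Fconj F P Q -> #|'N_S(Q)| <= #|'N_S(P)|.
Definition fully_centralized (S : {set gT}) (F : {set fus_triple}) P : Prop :=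
  forall Q, Fconj F P Q -> #|'C_S(Q)| <= #|'C_S(P)|.

Definition Nphi (S : {set gT}) P (f : {ffun gT -> gT}) : {set gT} :=
  [set g in 'N_S(P) | [exists h in 'N_S(f @: P),
     [forall x in P, f (x ^ g^-1) == (f x) ^ h^-1]]].

(* saturation (Broto-Levi-Oliver).  Aut_S(P) is a p-subgroup of the group
   Aut_F(P); "Aut_S(P) is a Sylow p-subgroup of Aut_F(P)" is stated as
   |Aut_S(P)| = |Aut_F(P)|_p. *)
Definition saturated (p : nat) (S : {set gT}) (F : {set fus_triple}) : Prop :=
  (forall P, group_set P -> P \subset S -> fully_normalized S F P ->
     fully_centralized S F P /\ #|AutS S P| = partn #|AutF F P| p)
  /\ (forall P f, (P, S, f) \in F -> fully_centralized S F (f @: P) ->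
     exists psi, (Nphi S P f, S, psi) \in F /\ {in P, forall x, psi x = f x}).

Record biset := Biset {
  bcar : finType;
  bdom : {set bcar};
  blact : gT -> bcar -> bcar;
  bract : bcar -> gT -> bcar }.

(* generator descriptor (L, Rg, C, f) : the (L,Rg)-biset (L x Rg)/{(f c, c) | c in C}
   with actions a.(x,y).b = (a x, b^-1 y) on cosets. *)
Definition gdesc := ({set gT} * {set gT} * {set gT} * {ffun gT -> gT})%type.
Definition gleft (g : gdesc) := g.1.1.1.
Definition gright (g : gdesc) := g.1.1.2.

Definition gen_biset (g : gdesc) : biset :=
  let: (L, Rg, C, f) := g in
  @Biset {set (gT * gT)}
    [set [set (x.1 * f h, x.2 * h) | h in C] | x in setX L Rg]
    (fun a O => [set (a * q.1, q.2) | q in O])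
    (fun O b => [set (q.1, b^-1 * q.2) | q in O]).

(* X x_J Y = (X x Y) / J,  (x j, y) ~ (x, j y) *)
Definition btensor (J : {set gT}) (X Y : biset) : biset :=
  @Biset {set (bcar X * bcar Y)}
    [set [set (bract q.1 j^-1, blact j q.2) | j in J] | q in setX (bdom X) (bdom Y)]
    (fun a O => [set (blact a q.1, q.2) | q in O])
    (fun O b => [set (q.1, bract q.2 b) | q in O]).

(* The class of an (H,K)-biset X is recorded by its coordinates on the
   transitive bisets (H x K)/L : the number of (H x K)-orbits of X whose
   stabilizers (for (a,b).x = a x b^-1) are conjugate in H x K to L. *)
Definition bstab H K (X : biset) (x : bcar X) : {set (gT * gT)} :=
  [set q in setX H K | blact q.1 (bract x q.2^-1) == x].
Definition borbits H K (X : biset) : {set {set bcar X}} :=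
  [set [set blact a (bract x b) | a in H, b in K] | x in bdom X].
Definition nb_type H K (X : biset) (L : {set (gT * gT)}) : nat :=
  #|[set O in borbits H K X | [exists x in O, L \in bstab H K x :^: setX H K]]|.

Definition cidx := ({set gT} * {set gT} * {set (gT * gT)})%type.
Local Notation coordT R := ({ffun cidx -> R^o}) (only parsing).

Definition bclass (R : comPzRingType) H K (X : biset) : coordT R :=
  [ffun t : cidx => if (t.1.1 == H) && (t.1.2 == K) then ((nb_type H K X t.2)%:R)%R else 0%R].

Fixpoint wbiset (g : gdesc) (w : seq gdesc) : biset :=
  match w with
  | [::] => gen_biset g
  | g' :: w' => btensor (gright g) (gen_biset g) (wbiset g' w')
  end.

(* class of the product of a word; 0 if the groups do not match *)
Definition wval (R : comPzRingType) (w : seq gdesc) : coordT R :=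
  match w with
  | [::] => 0%R
  | g :: w' =>
      if path (fun g1 g2 => gright g1 == gleft g2) g w'
      then bclass R (gleft g) (gright (last g w')) (wbiset g w')
      else 0%R
  end.

(* generators I^K_H, R^K_H (H <= K <= S) and c_phi (phi : H -> phi(H) in F) *)
Definition isGen (S : {set gT}) (F : {set fus_triple}) (g : gdesc) : Prop :=
  (exists H K, [/\ group_set H, group_set K, H \subset K, K \subset S &
                   g = (K, H, H, restrict H id)])
  \/ (exists H K, [/\ group_set H, group_set K, H \subset K, K \subset S &
                   g = (H, K, H, restrict H id)])
  \/ (exists H (f : {ffun gT -> gT}), (H, f @: H, f) \in F /\ g = (f @: H, H, H, f)).

(* mu_R(F): R-linear combinations of classes of products of generators *)
Definition in_mu (R : comPzRingType) (S : {set gT}) (F : {set fus_triple})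
    (v : coordT R) : Prop :=
  exists s : seq (R * seq gdesc),
    (forall q g, q \in s -> g \in q.2 -> isGen S F g) /\
    v = (\sum_(q <- s) q.1 *: wval R q.2)%R.

Definition bidx := ({set gT} * {set gT} * {set gT} * {ffun gT -> gT})%type.

Definition basis_word (i : bidx) : seq gdesc :=
  let: (A, B, C, f) := i in
  [:: (B, f @: C, f @: C, restrict (f @: C) id); (f @: C, C, C, f); (C, A, C, restrict C id)].

Definition bvec (R : comPzRingType) (i : bidx) : coordT R := wval R (basis_word i).

Definition dcoset A B C (f : {ffun gT -> gT}) : {set {ffun gT -> gT}} :=
  [set restrict C (fun x => (f (x ^ a^-1)) ^ b^-1) | a in 'N_A(C), b in B].

Definition crep_system (S : {set gT}) (crep : {set gT} -> {set {set gT}}) : Prop :=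
  forall A, group_set A -> A \subset S ->
    (forall C, C \in crep A -> group_set C && (C \subset A)) /\
    (forall C, group_set C -> C \subset A -> #|[set D in crep A | D \in C :^: A]| = 1%N).

Definition phirep_system (S : {set gT}) (F : {set fus_triple})
    (crep : {set gT} -> {set {set gT}})
    (phirep : {set gT} -> {set gT} -> {set gT} -> {set {ffun gT -> gT}}) : Prop :=
  forall A B C, group_set A -> group_set B -> A \subset S -> B \subset S -> C \in crep A ->
    phirep A B C \subset HomF F C B /\
    (forall f, f \in HomF F C B -> #|phirep A B C :&: dcoset A B C f| = 1%N).

Definition basis_index (S : {set gT}) (crep : {set gT} -> {set {set gT}})
    (phirep : {set gT} -> {set gT} -> {set gT} -> {set {ffun gT -> gT}}) : {set bidx} :=
  [set i : bidx | [&& group_set i.1.1.1, group_set i.1.1.2, i.1.1.1 \subset S,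
                      i.1.1.2 \subset S, i.1.2 \in crep i.1.1.1 &
                      i.2 \in phirep i.1.1.1 i.1.1.2 i.1.2]].

End FusionMackey.
Notation coordT gT R := ({ffun cidx gT -> R^o}) (only parsing).

(* Main.v *)
Require Import Defs.
From HB Require Import structures.
From mathcomp Require Import all_boot all_order all_algebra all_fingroup all_solvable.
Import GRing.Theory.
Set Implicit Arguments. Unset Strict Implicit. Unset Printing Implicit Defensive.
Local Open Scope group_scope.

Section Bisets.
Variable gT : finGroupType.

Record good (X : biset gT) : Prop := Good {
  gl1 : forall x : bcar X, blact 1 x = x;
  glM : forall a b (x : bcar X), blact (a * b) x = blact a (blact b x);
  gr1 : forall x : bcar X, bract x 1 = x;
  grM : forall a b (x : bcar X), bract x (a * b) = bract (bract x a) b;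
  glr : forall a b (x : bcar X), blact a (bract x b) = bract (blact a x) b }.

Lemma good_gen g : good (gen_biset g).
Proof.
case: g => [[[L Rg] C] f]; split => /=.
- move=> O; rewrite -[RHS]imset_id; apply: eq_imset => -[? ?] /=; by rewrite mul1g.
- move=> a b O; rewrite -imset_comp; apply: eq_imset => -[? ?] /=; by rewrite mulgA.
- move=> O; rewrite -[RHS]imset_id; apply: eq_imset => -[? ?] /=; by rewrite invg1 mul1g.
- move=> a b O; rewrite -imset_comp; apply: eq_imset => -[? ?] /=; by rewrite invMg mulgA.
- move=> a b O; rewrite -!imset_comp; apply: eq_imset => -[? ?] //.
Qed.

Lemma good_tensor J X Y : good X -> good Y -> good (btensor J X Y).
Proof.
move=> [l1 lM r1 rM lr] [l1' lM' r1' rM' lr']; split => /=.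
- move=> O; rewrite -[RHS]imset_id; apply: eq_imset => -[? ?] /=; by rewrite l1.
- move=> a b O; rewrite -imset_comp; apply: eq_imset => -[? ?] /=; by rewrite lM.
- move=> O; rewrite -[RHS]imset_id; apply: eq_imset => -[? ?] /=; by rewrite r1'.
- move=> a b O; rewrite -imset_comp; apply: eq_imset => -[? ?] /=; by rewrite rM'.
- move=> a b O; rewrite -!imset_comp; apply: eq_imset => -[? ?] //.
Qed.

End Bisets.
Section Tensor.
Variable gT : finGroupType.
Variables (J : {group gT}) (X Y : biset gT).
Hypotheses (gX : good X) (gY : good Y).

Definition torb (x : bcar X) (y : bcar Y) : {set (bcar X * bcar Y)} :=
  [set (bract x j^-1, blact j y) | j in J].

Lemma orb_shift k x y : k \in J -> torb (bract x k^-1) (blact k y) = torb x y.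
Proof.
move=> Jk; apply/setP => u; apply/imsetP/imsetP => -[j Jj ->].
- exists (j * k); first by rewrite groupM.
  by rewrite -(grM gX) -(glM gY) invMg.
- exists (j * k^-1); first by rewrite groupM ?groupV.
  by rewrite -(grM gX) -(glM gY) invMg invgK mulKg mulgKV.
Qed.

Lemma orb_self x y : (x, y) \in torb x y.
Proof. by apply/imsetP; exists 1; rewrite ?group1 // invg1 (gr1 gX) (gl1 gY). Qed.

Lemma orb_mem u x y : u \in torb x y -> torb u.1 u.2 = torb x y.
Proof. by case/imsetP => j Jj -> /=; rewrite orb_shift. Qed.

Lemma orb_eq x y x' y' : (torb x' y' == torb x y) = ((x', y') \in torb x y).
Proof.
apply/eqP/idP => [<-|/orb_mem //]; exact: orb_self.
Qed.

Lemma blact_orb a x y :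
  @blact _ (btensor J X Y) a (torb x y) = torb (blact a x) y.
Proof.
rewrite /= /torb -imset_comp; apply: eq_imset => j /=; by rewrite (glr gX).
Qed.

Lemma bract_orb b x y :
  @bract _ (btensor J X Y) (torb x y) b = torb x (bract y b).
Proof.
rewrite /= /torb -imset_comp; apply: eq_imset => j /=; by rewrite (glr gY).
Qed.

Lemma stab_tensor H K x y :
  bstab H K (X := btensor J X Y) (torb x y) =
  [set q in setX H K | [exists j in J, ((q.1, j) \in bstab H J x) && ((j, q.2) \in bstab J K y)]].
Proof.
apply/setP => -[a b]; rewrite /bstab inE [in RHS]inE.
rewrite bract_orb blact_orb orb_eq.
rewrite /=; case hab: (_ \in setX H K) => //=.
move: hab; rewrite inE /= => /andP [Ha Kb].
apply/imsetP/existsP => [[j Jj [e1 e2]]|[j /andP [Jj /andP [s1 s2]]]].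
- exists j^-1; rewrite !inE /= groupV Jj /= invgK.
  rewrite (glr gX) e1 -(grM gX) mulVg (gr1 gX) eqxx /=.
  by rewrite e2 -(glM gY) mulVg (gl1 gY) eqxx Ha Kb.
- exists j^-1; first by rewrite groupV.
  move: s1 s2; rewrite !inE /= => /andP [_ /eqP s1] /andP [_ /eqP s2].
  congr (_, _).
  + by rewrite -{2}s1 invgK -(glr gX) -(grM gX) mulVg (gr1 gX).
  + by rewrite -{2}s2 -(glM gY) mulVg (gl1 gY).
Qed.

Lemma orb_shift' k x y : k \in J -> torb (bract x k) y = torb x (blact k y).
Proof.
move=> Jk; rewrite -(orb_shift x (blact k y) (groupVr Jk)) invgK.
by rewrite -(glM gY) mulVg (gl1 gY).
Qed.

Lemma tensor_dom z : z \in bdom (btensor J X Y) ->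
  exists2 x, x \in bdom X & exists2 y, y \in bdom Y & z = torb x y.
Proof.
by case/imsetP => -[x y]; rewrite inE => /andP [Dx Dy] ->; exists x => //; exists y.
Qed.

Lemma orb_dom x y : x \in bdom X -> y \in bdom Y -> torb x y \in bdom (btensor J X Y).
Proof. by move=> Dx Dy; apply/imsetP; exists (x, y); rewrite ?inE ?Dx. Qed.

Lemma tensor_trans (H K : {group gT}) x0 y0 :
  (forall x, x \in bdom X -> exists2 a, a \in H & exists2 j, j \in J & x = blact a (bract x0 j)) ->
  (forall y, y \in bdom Y -> exists2 j, j \in J & exists2 b, b \in K & y = blact j (bract y0 b)) ->
  (forall j, j \in J -> exists2 a, a \in H & bract x0 j = blact a x0) ->
  forall z, z \in bdom (btensor J X Y) ->
  exists2 a, a \in H & exists2 b, b \in K &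
    z = @blact _ (btensor J X Y) a (@bract _ (btensor J X Y) (torb x0 y0) b).
Proof.
move=> tX tY sX z /tensor_dom [x /tX [a Ha [j Jj ->]]] [y /tY [j' Jj' [b Kb ->]]] ->.
have Jjj : j * j' \in J by rewrite groupM.
have [a' Ha' e] := sX _ Jjj.
exists (a * a'); first by rewrite groupM.
exists b => //.
rewrite -blact_orb orb_shift' // -(glM gY) (glr gY) -bract_orb -(orb_shift' x0 y0 Jjj) e -blact_orb.
have gt := good_tensor J gX gY; by rewrite (glM gt) -(glr gt).
Qed.

End Tensor.
Section Conj.
Variable rT : finGroupType.
Lemma conj_class (G : {group rT}) (A B L : {set rT}) :
  A \in B :^: G -> (L \in A :^: G) = (L \in B :^: G).
Proof.
case/imsetP => g Gg ->; apply/imsetP/imsetP => -[h Gh ->].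
- by exists (g * h); rewrite ?groupM // conjsgM.
- exists (g^-1 * h); rewrite ?groupM ?groupV //.
  by rewrite conjsgM conjsgK.
Qed.
End Conj.

Section Stab.
Variable gT : finGroupType.
Variable X : biset gT.
Hypothesis gX : good X.

Lemma act_inj a b (e x : bcar X) :
  (blact a (bract e b) == blact a (bract x b)) = (e == x).
Proof.
apply/eqP/eqP => [h|-> //].
have := congr1 (fun z => blact a^-1 (bract z b^-1)) h.
by rewrite -!(glr gX) -!(glM gX) -!(grM gX) mulVg mulgV (gl1 gX) (gr1 gX) (gl1 gX) (gr1 gX).
Qed.

Lemma stab_act (H K : {group gT}) a b (x : bcar X) : a \in H -> b \in K ->
  bstab H K (blact a (bract x b)) = bstab H K x :^ ((a^-1, b) : gT * gT).
Proof.
move=> Ha Kb; apply/setP => -[u v]; rewrite mem_conjg /bstab !inE /= !invgK.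
rewrite groupMl ?groupV // groupMr // groupMl // groupMr ?groupV //.
congr (_ && _).
rewrite -[X in _ = X](act_inj a b) -!(glr gX) -!(glM gX) -!(grM gX).
congr (blact _ (bract _ _) == _); first by rewrite mulKVg.
by rewrite !invMg invgK mulgKV.
Qed.
End Stab.
Section Gen.
Variable gT : finGroupType.

Definition hom (C : {set gT}) (f : gT -> gT) := {in C &, forall x y, f (x * y) = f x * f y}.

Lemma hom1 (C : {group gT}) f : hom C f -> f 1 = 1.
Proof. move=> hf; have := hf 1 1 (group1 C) (group1 C); rewrite mulg1.
by move/(congr1 (mulg (f 1)^-1)); rewrite mulVg mulKg => /esym.
Qed.

Lemma homV (C : {group gT}) f x : hom C f -> x \in C -> f x^-1 = (f x)^-1.
Proof. move=> hf Cx; apply: (mulgI (f x)); by rewrite -hf ?groupV // !mulgV (hom1 hf). Qed.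

Definition cos (C : {set gT}) (f : gT -> gT) (u : gT * gT) : {set gT * gT} :=
  [set (u.1 * f h, u.2 * h) | h in C].

Definition tw (D : {set gT}) (t : gT -> gT) : {set gT * gT} := [set (t d, d) | d in D].

Variables (C : {group gT}) (f : {ffun gT -> gT}).
Hypothesis hf : hom C f.

Lemma cos_self u : u \in cos C f u.
Proof. apply/imsetP; exists 1 => //; rewrite (hom1 hf) !mulg1; by case: u. Qed.

Lemma cos_mem u v : u \in cos C f v -> cos C f u = cos C f v.
Proof.
case/imsetP => c Cc -> /=; apply/setP => w; apply/imsetP/imsetP => -[h Ch ->] /=.
- by exists (c * h); rewrite ?groupM // hf // !mulgA.
- exists (c^-1 * h); rewrite ?groupM ?groupV // hf ?groupV // (homV hf) //.
  by rewrite !mulgA !mulgK.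
Qed.

Lemma cos_eq u v : (cos C f u == cos C f v) = (u \in cos C f v).
Proof. apply/eqP/idP => [<-|/cos_mem //]; exact: cos_self. Qed.

Lemma gen_blact L Rg a u :
  @blact _ (gen_biset (L, Rg, gval C, f)) a (cos C f u) = cos C f (a * u.1, u.2).
Proof. rewrite /= /cos -imset_comp; apply: eq_imset => h /=. by rewrite mulgA. Qed.


Lemma gen_bract L Rg b u :
  @bract _ (gen_biset (L, Rg, gval C, f)) (cos C f u) b = cos C f (u.1, b^-1 * u.2).
Proof. rewrite /= /cos -imset_comp; apply: eq_imset => h /=. by rewrite mulgA. Qed.

Lemma gen_stab (L Rg : {group gT}) u : u \in setX L Rg ->
  (forall c, c \in C -> f c \in L) -> C \subset Rg ->
  bstab L Rg (X := gen_biset (gval L, gval Rg, gval C, f)) (cos C f u)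
  = [set ((f c) ^ u.1^-1, c ^ u.2^-1) | c in C].
Proof.
case: u => u1 u2; rewrite inE /= => /andP [Lu1 Ru2] fL sCR.
apply/setP => -[a b]; rewrite /bstab inE gen_bract gen_blact cos_eq /=.
apply/andP/imsetP => [[Hab /imsetP [c Cc [e1 e2]]]|[c Cc [-> ->]]].
- exists c => //; congr (_, _).
  + by rewrite /conjg invgK mulgA -e1 mulgK.
  + by rewrite /conjg invgK mulgA -[b]invgK -e2 mulgK.
- split.
  + by rewrite inE /= groupJ ?groupV ?fL // groupJ ?groupV // (subsetP sCR).
  + apply/imsetP; exists c => //=; congr (_, _).
    * by rewrite /conjg invgK -mulgA mulgKV.
    * by rewrite invgK /conjg invgK -mulgA mulgKV.
Qed.

Lemma gen_base (L Rg : {group gT}) :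
  (forall c, c \in C -> f c \in L) -> C \subset Rg ->
  bstab L Rg (X := gen_biset (gval L, gval Rg, gval C, f)) (cos C f (1, 1))
  = tw C f.
Proof.
move=> fL sCR; rewrite gen_stab // ?inE ?group1 //.
by apply: eq_imset => c /=; rewrite invg1 !conjg1.
Qed.

Lemma gen_dom (L Rg : {group gT}) (x : bcar (gen_biset (gval L, gval Rg, gval C, f))) :
  x \in bdom (gen_biset (gval L, gval Rg, gval C, f)) ->
  exists2 a, a \in L & exists2 b, b \in Rg &
    x = @blact _ (gen_biset (gval L, gval Rg, gval C, f)) a
          (@bract _ (gen_biset (gval L, gval Rg, gval C, f)) (cos C f (1, 1)) b).
Proof.
case/imsetP => -[u1 u2]; rewrite inE => /andP [Lu1 Ru2] ->.
exists u1 => //; exists u2^-1; first by rewrite groupV.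
by rewrite gen_bract gen_blact /cos /= invgK !mulg1.
Qed.

Lemma gen_base_dom (L Rg : {group gT}) : cos C f (1, 1) \in bdom (gen_biset (gval L, gval Rg, gval C, f)).
Proof. by apply/imsetP; exists (1, 1); rewrite ?inE ?group1. Qed.

Lemma gen_shift L Rg j : j \in C ->
  @bract _ (gen_biset (L, Rg, gval C, f)) (cos C f (1, 1)) j
  = @blact _ (gen_biset (L, Rg, gval C, f)) (f j) (cos C f (1, 1)).
Proof.
move=> Cj; rewrite gen_bract gen_blact /= !mulg1; apply/eqP; rewrite cos_eq.
by apply/imsetP; exists j^-1; rewrite ?groupV //= (homV hf) // mul1g mulgV.
Qed.

End Gen.
Section Fus.
Variable gT : finGroupType.
Implicit Types (P Q T : {set gT}) (f g : {ffun gT -> gT}).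
Variables (S : {group gT}) (F : {set fus_triple gT}).
Hypothesis fusF : is_fusion_system S F.

Lemma F_tr P Q f : (P, Q, f) \in F ->
  [/\ group_set P, group_set Q, P \subset S, Q \subset S & injhom P Q f].
Proof. by case: fusF => F1 _ _ _; apply: F1. Qed.

Lemma injhom_hom P Q f : injhom P Q f -> hom P f.
Proof. by case/and4P => _ /forall_inP h _ _ x y Px Py; move/forall_inP: (h x Px) => /(_ y Py) /eqP. Qed.

Lemma injhom_in P Q f x : injhom P Q f -> x \in P -> f x \in Q.
Proof. by case/and4P => /subsetP sQ _ _ _ Px; apply: sQ; apply: imset_f. Qed.

Lemma injhom_out P Q f x : injhom P Q f -> x \notin P -> f x = 1.
Proof. by case/and4P => _ _ _ /forallP /(_ x) /implyP h nPx; apply/eqP/h. Qed.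

Lemma injhom_inj P Q f : injhom P Q f -> {in P &, injective f}.
Proof. by case/and4P => _ _ /forall_inP h _ x y Px Py e; move/forall_inP: (h x Px) => /(_ y Py) /implyP; rewrite e eqxx => /(_ isT) /eqP. Qed.

Lemma F_hom P Q f : (P, Q, f) \in F -> hom P f.
Proof. by case/F_tr => _ _ _ _ /injhom_hom. Qed.

Lemma F_in P Q f x : (P, Q, f) \in F -> x \in P -> f x \in Q.
Proof. by case/F_tr => _ _ _ _ /injhom_in; apply. Qed.

Lemma conjmapE P s x : x \in P -> conjmap P s x = x ^ s^-1.
Proof. by move=> Px; rewrite /conjmap /restrict ffunE Px. Qed.

Lemma restrictE P (h : gT -> gT) x : x \in P -> restrict P h x = h x.
Proof. by move=> Px; rewrite /restrict ffunE Px. Qed.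

Lemma F_conj (P Q : {group gT}) s : P \subset S -> Q \subset S -> s \in S ->
  P :^ s^-1 \subset Q -> (gval P, gval Q, conjmap P s) \in F.
Proof. by case: fusF => _ F2 _ _; apply: F2; apply: groupP. Qed.

Lemma F_comp P Q T f g : (P, Q, f) \in F -> (Q, T, g) \in F ->
  exists2 h, (P, T, h) \in F & {in P, forall x, h x = g (f x)}.
Proof.
case: fusF => _ _ F3 _ hf hg; exists (restrict P (fun x => g (f x))); first exact: F3 hf hg.
by move=> x Px; rewrite restrictE.
Qed.

Lemma F_incl (P Q : {group gT}) : P \subset Q -> Q \subset S ->
  exists2 h, (gval P, gval Q, h) \in F & {in P, forall x, h x = x}.
Proof.
move=> sPQ sQS; exists (conjmap P 1).
  by apply: F_conj; rewrite ?group1 ?invg1 ?conjsg1 // (subset_trans sPQ).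
by move=> x Px; rewrite conjmapE // invg1 conjg1.
Qed.

Lemma F_res P Q f (P' Q' : {group gT}) : (P, Q, f) \in F -> P' \subset P ->
  Q' \subset S -> (forall x, x \in P' -> f x \in Q') ->
  exists2 h, (gval P', gval Q', h) \in F & {in P', forall x, h x = f x}.
Proof.
move=> hF sP' sQ' fQ'.
have [gP _ sPS _ _] := F_tr hF.
have [h1 h1F h1E] := F_incl (P := P') (Q := Group gP) sP' sPS.
have [h2 h2F h2E] := F_comp h1F hF.
have [F4a _] : (gval P', [set h2 x | x in gval P'], h2) \in F /\ ([set h2 x | x in gval P'], gval P', Defs.finv (gval P') h2) \in F.
  by case: fusF => _ _ _ F4; exact: F4 h2F.
have [_ gI _ sIS _] := F_tr F4a.
have sIQ : Group gI \subset Q'.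
  by apply/subsetP => _ /imsetP [x Px ->]; rewrite h2E // h1E // fQ'.
have [h3 h3F h3E] := F_incl sIQ sQ'.
have [h4 h4F h4E] := F_comp F4a h3F.
exists h4 => // x Px; rewrite h4E // h3E; last by apply/imsetP; exists x.
by rewrite h2E // h1E.
Qed.
End Fus.
Section Stabs.
Variable gT : finGroupType.
Variables (S : {group gT}) (F : {set fus_triple gT}).
Hypothesis fusF : is_fusion_system S F.

Definition stabF (H K : {set gT}) (X : biset gT) :=
  forall x, x \in bdom X -> exists D th, (D, H, th) \in F /\ bstab H K x = tw D th.

Lemma tw_ext (D : {set gT}) (t t' : gT -> gT) : {in D, t =1 t'} -> tw D t = tw D t'.
Proof. by move=> e; apply: eq_in_imset => d Dd; rewrite e. Qed.

Lemma bstab_sub H K (X : biset gT) (x : bcar X) q : q \in bstab H K x -> q.1 \in H /\ q.2 \in K.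
Proof. by rewrite !inE => /andP [/andP [? ?] _]. Qed.

Lemma gen_stabF (L Rg C : {group gT}) (f : {ffun gT -> gT}) :
  L \subset S -> Rg \subset S -> C \subset Rg -> (gval C, gval L, f) \in F ->
  stabF L Rg (gen_biset (gval L, gval Rg, gval C, f)).
Proof.
move=> sLS sRS sCR fF x /imsetP [u Hu ->].
have hf := F_hom fusF fF.
have fL : forall c, c \in C -> f c \in L by move=> c; apply: (F_in fusF fF).
rewrite (gen_stab hf _ fL sCR) //.
move: Hu; rewrite inE => /andP [Lu1 Ru2].
have sCS := subset_trans sCR sRS.
have Su2 : u.2 \in S by apply: (subsetP sRS).
have Su1 : u.1 \in S by apply: (subsetP sLS).
set D := (C :^ u.2^-1)%G.
have sDS : D \subset S.
  by apply/subsetP => _ /imsetP [c Cc ->]; rewrite groupJ ?groupV // (subsetP sCS).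
have [h1 h1F h1E] : exists2 h1, (gval D, gval C, h1) \in F & h1 = conjmap D u.2^-1.
  exists (conjmap D u.2^-1) => //; apply: (F_conj fusF); rewrite ?groupV //.
  by rewrite invgK /D /= conjsgKV.
have [h2 h2F h2E] := F_comp fusF h1F fF.
have cLF : (gval L, gval L, conjmap L u.1) \in F.
  by apply: (F_conj fusF) => //; rewrite conjGid ?groupV.
have [h3 h3F h3E] := F_comp fusF h2F cLF.
exists (gval D), h3; split => //.
rewrite /tw /D /= /conjugate -imset_comp; apply: eq_in_imset => c Cc /=.
have Dc : c ^ u.2^-1 \in D by rewrite memJ_conjg.
rewrite h3E // h2E // h1E conjmapE //.
  by rewrite (conjmapE _ Dc) invgK conjgKV.
by rewrite (conjmapE _ Dc) invgK conjgKV fL.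
Qed.

Lemma tensor_stabF (J : {group gT}) (X Y : biset gT) (H K : {set gT}) :
  good X -> good Y -> stabF H J X -> stabF J K Y -> stabF H K (btensor J X Y).
Proof.
move=> gX gY sX sY z /tensor_dom [x Dx [y Dy ->]].
have [D1 [t1 [F1 e1]]] := sX x Dx.
have [D2 [t2 [F2 e2]]] := sY y Dy.
have [gD1 _ sD1S _ ih1] := F_tr fusF F1.
have [gD2 _ sD2S _ ih2] := F_tr fusF F2.
have h2 := injhom_hom ih2.
pose D := [set d in D2 | t2 d \in D1].
have gD : group_set D.
  apply/group_setP; split.
    by rewrite inE (group1 (Group gD2)) (hom1 (C := Group gD2) h2) (group1 (Group gD1)).
  move=> u v; rewrite !inE => /andP [Du Du1] /andP [Dv Dv1].
  rewrite (groupM (G := Group gD2)) //= h2 //.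
  exact: (groupM (G := Group gD1)).
have sDD2 : Group gD \subset D2 by apply/subsetP => d; rewrite inE => /andP [].
have vD : forall d, d \in Group gD -> t2 d \in Group gD1.
  by move=> d; rewrite inE => /andP [].
have [h hF hE] := F_res fusF (P' := Group gD) (Q' := Group gD1) F2 sDD2 sD1S vD.
have [h' h'F h'E] := F_comp fusF hF F1.
exists D, h'; split => //.
rewrite (stab_tensor J gX gY) e1 e2; apply/setP => -[a b].
rewrite inE; apply/andP/imsetP.
- case=> _ /exists_inP [j Jj /andP [/imsetP [d1 Dd1 [-> ->]] /imsetP [d2 Dd2 [e3 ->]]]].
  have Dd2' : d2 \in D by rewrite inE Dd2 -e3.
  by exists d2 => //; rewrite h'E // hE // -e3.
- case=> d Dd ->.
  move: (Dd); rewrite inE => /andP [Dd2 Dd1].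
  have q2 : (t2 d, d) \in bstab J K y by rewrite e2; apply: imset_f.
  have q1 : (t1 (t2 d), t2 d) \in bstab H J x by rewrite e1; apply: imset_f.
  have [Jt Kd] := bstab_sub q2.
  have [Ht _] := bstab_sub q1.
  rewrite h'E // hE //; split; first by rewrite inE /= Ht Kd.
  apply/exists_inP; exists (t2 d) => //=.
  by rewrite -e1 -e2 q1 q2.
Qed.
End Stabs.
Section NB.
Variable rT : finGroupType.
Implicit Types (G : {group rT}) (A B L M : {set rT}).

Lemma conj_refl G A : A \in A :^: G.
Proof. by apply/imsetP; exists 1; rewrite ?group1 ?conjsg1. Qed.

Lemma conj_sym G A B : A \in B :^: G -> B \in A :^: G.
Proof. by case/imsetP => g Gg ->; apply/imsetP; exists g^-1; rewrite ?groupV ?conjsgK. Qed.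

Lemma conj_swap G L L' M : L' \in L :^: G -> (L' \in M :^: G) = (L \in M :^: G).
Proof.
move=> h; apply/idP/idP => h'.
- apply: conj_sym; rewrite -(conj_class M h); exact: conj_sym h'.
- apply: conj_sym; rewrite (conj_class M h); exact: conj_sym h'.
Qed.
End NB.

Section NB2.
Variable gT : finGroupType.
Variables (H K : {group gT}) (X : biset gT).
Hypothesis gX : good X.

Lemma nb_conj L L' : L' \in L :^: setX H K -> nb_type H K X L' = nb_type H K X L.
Proof.
move=> h; rewrite /nb_type; apply: eq_card => O; rewrite !inE; congr (_ && _).
apply: eq_existsb_in => x _; exact: (conj_swap (G := setX_group H K)).
Qed.

Lemma orbit_same (x : bcar X) a b : a \in H -> b \in K ->
  [set blact a' (bract (blact a (bract x b)) b') | a' in H, b' in K]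
  = [set blact a' (bract x b') | a' in H, b' in K].
Proof.
move=> Ha Kb; apply/setP => y; apply/imset2P/imset2P => -[a' b' Ha' Kb' ->].
- exists (a' * a) (b * b'); rewrite ?groupM //.
  by rewrite -(glr gX) -(glM gX) -(grM gX).
- exists (a' * a^-1) (b^-1 * b'); rewrite ?groupM ?groupV //.
  by rewrite -(glr gX) -(glM gX) -(grM gX) mulgKV mulKVg.
Qed.

Lemma stab_conj_orbit (x y : bcar X) L :
  y \in [set blact a (bract x b) | a in H, b in K] ->
  (L \in bstab H K y :^: setX H K) = (L \in bstab H K x :^: setX H K).
Proof.
case/imset2P => a b Ha Kb ->; rewrite (stab_act gX) //.
apply: (@conj_class _ (setX_group H K)); apply/imsetP.
by exists (a^-1, b); rewrite // inE /= groupV Ha Kb.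
Qed.

Lemma nb_trans (x0 : bcar X) L : x0 \in bdom X ->
  (forall x, x \in bdom X -> exists2 a, a \in H & exists2 b, b \in K & x = blact a (bract x0 b)) ->
  nb_type H K X L = (L \in bstab H K x0 :^: setX H K).
Proof.
move=> Dx0 tX.
set O0 := [set blact a (bract x0 b) | a in H, b in K].
have x0O : x0 \in O0.
  by apply/imset2P; exists 1 1; rewrite ?group1 // (gr1 gX) (gl1 gX).
have eO : borbits H K X = [set O0].
  apply/setP => O; rewrite inE; apply/imsetP/eqP => [[x /tX [a Ha [b Kb ->]] ->]|->].
  - exact: orbit_same.
  - by exists x0.
rewrite /nb_type eO.
have eP : [exists x in O0, L \in bstab H K x :^: setX H K] = (L \in bstab H K x0 :^: setX H K).
  apply/exists_inP/idP => [[x xO]|h]; last by exists x0.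
  by rewrite (stab_conj_orbit _ xO).
case: (boolP (L \in bstab H K x0 :^: setX H K)) => h.
- have -> : [set O in [set O0] | [exists x in O, L \in bstab H K x :^: setX H K]] = [set O0].
    by apply/setP => O; rewrite !inE; case: eqP => // ->; rewrite eP h.
  by rewrite cards1.
- have -> : [set O in [set O0] | [exists x in O, L \in bstab H K x :^: setX H K]] = set0.
    by apply/setP => O; rewrite !inE; case: eqP => // ->; rewrite eP (negbTE h).
  by rewrite cards0.
Qed.

Lemma nb_nz L : nb_type H K X L != 0 ->
  exists2 x, x \in bdom X & L \in bstab H K x :^: setX H K.
Proof.
rewrite /nb_type -lt0n card_gt0 => /set0Pn [O]; rewrite inE => /andP [/imsetP [x Dx ->]].
case/exists_inP => y yO hy; exists x => //; by rewrite -(stab_conj_orbit _ yO).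
Qed.
End NB2.
Section Main.
Variables (gT : finGroupType) (S : {group gT}) (F : {set fus_triple gT}).
Variables (crep : {set gT} -> {set {set gT}})
  (phirep : {set gT} -> {set gT} -> {set gT} -> {set {ffun gT -> gT}}).
Hypotheses (fusF : is_fusion_system S F) (crepS : crep_system S crep)
  (phiS : phirep_system S F crep phirep).
Local Notation I := (basis_index S crep phirep).

Lemma inI A B C f : (A, B, C, f) \in I ->
  [/\ group_set A, group_set B, A \subset S, B \subset S & C \in crep A /\ f \in phirep A B C].
Proof. by rewrite inE /= => /and5P [? ? ? ? /andP [? ?]]. Qed.

Lemma inI2 A B C f : (A, B, C, f) \in I ->
  [/\ group_set C, C \subset A & (C, B, f) \in F].
Proof.
move=> hI; have [gA gB sA sB [cC pf]] := inI hI.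
have [/(_ C cC) /andP [gC sCA] _] := crepS gA sA.
have [sub _] := phiS gA gB sA sB cC.
by split => //; move/subsetP: sub => /(_ f pf); rewrite inE.
Qed.

Lemma tw_conj (D : {set gT}) (t : gT -> gT) (g : gT * gT) :
  tw D t :^ g = [set ((t d) ^ g.1, d ^ g.2) | d in D].
Proof. by rewrite /conjugate /tw -imset_comp. Qed.

Lemma uniq_idx A B C f C' f' : (A, B, C, f) \in I -> (A, B, C', f') \in I ->
  tw C f \in tw C' f' :^: setX B A -> C = C' /\ f = f'.
Proof.
move=> h1 h2.
have [gA gB sA sB [cC pf]] := inI h1; have [_ _ _ _ [cC' pf']] := inI h2.
have [gC sCA fF] := inI2 h1; have [gC' sC'A f'F] := inI2 h2.
case/imsetP => -[g1 g2]; rewrite inE /= => /andP [Bg1 Ag2]; rewrite tw_conj /= => e.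
have m1 : forall d, d \in C' -> d ^ g2 \in C /\ f (d ^ g2) = (f' d) ^ g1.
  move=> d Cd; have : ((f' d) ^ g1, d ^ g2) \in tw C f by rewrite e; apply/imsetP; exists d.
  by case/imsetP => c Cc [-> ->].
have m2 : forall c, c \in C -> exists2 d, d \in C' & c = d ^ g2.
  move=> c Cc; have : (f c, c) \in tw C f by apply/imsetP; exists c.
  by rewrite e => /imsetP [d Cd [_ ->]]; exists d.
have eC : C = C' :^ g2.
  apply/eqP; rewrite eqEsubset; apply/andP; split; apply/subsetP.
  - by move=> c /m2 [d Cd ->]; rewrite memJ_conjg.
  - by move=> _ /imsetP [d Cd ->]; case: (m1 d Cd).
have [_ cnt] := crepS gA sA.
have eCC' : C = C'.
  move: (cnt C gC sCA); move/eqP/cards1P => [z ez].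
  have : C \in [set z] by rewrite -ez inE cC; exact: (conj_refl (Group gA)).
  have : C' \in [set z].
    rewrite -ez inE cC' /=; apply/imsetP; exists g2^-1; first by rewrite (groupV (Group gA)).
    by rewrite eC conjsgK.
  by rewrite !inE => /eqP -> /eqP ->.
subst C'; split => //.
have Ng2 : g2 \in 'N(C) by apply/normP; rewrite -eC.
have [_ cnt2] := phiS gA gB sA sB cC.
have f'H : f' \in HomF F C B by rewrite inE.
move: (cnt2 f' f'H); move/eqP/cards1P => [z ez].
have : f \in [set z].
  rewrite -ez inE pf; apply/imset2P; exists g2 g1^-1.
  - by rewrite inE Ag2 Ng2.
  - by rewrite (groupV (Group gB)).
  apply/ffunP => x; rewrite ffunE; case: ifP => Cx.
  - have Cx' : x ^ g2^-1 \in C by rewrite memJ_norm // groupV.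
    by rewrite invgK; have [_ <-] := m1 _ Cx'; rewrite conjgKV.
  - by have [_ _ _ _ ih] := F_tr fusF fF; rewrite (injhom_out ih) ?Cx.
have : f' \in [set z].
  rewrite -ez inE pf'; apply/imset2P; exists 1 1.
  - by rewrite inE group1 (group1 (Group gA)).
  - by rewrite (group1 (Group gB)).
  apply/ffunP => x; rewrite ffunE; case: ifP => Cx.
  - by rewrite invg1 !conjg1.
  - by have [_ _ _ _ ih] := F_tr fusF f'F; rewrite (injhom_out ih) ?Cx.
by rewrite !inE => /eqP -> /eqP ->.
Qed.

Lemma rep_idx (H K : {group gT}) D t : H \subset S -> K \subset S ->
  (D, gval H, t) \in F -> D \subset K ->
  exists C f, (gval K, gval H, C, f) \in I /\ tw C f \in tw D t :^: setX H K.
Proof.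
move=> sH sK hF sDK.
have [gD _ sDS _ ih] := F_tr fusF hF.
have [crepK cntK] := crepS (groupP K) sK.
move: (cntK D gD sDK) => /eqP/cards1P [C eC].
have : C \in [set C] by rewrite inE.
rewrite -eC inE => /andP [cC /imsetP [k Kk eCk]].
have /andP [gC sCK] := crepK C cC.
have sCS := subset_trans sCK sK.
have Sk : k \in S by apply: (subsetP sK).
have cF : (gval (Group gC), gval (Group gD), conjmap C k) \in F.
  by apply: (F_conj fusF) => //=; rewrite eCk conjsgK.
have [f0 f0F f0E] := F_comp fusF cF hF.
have [sub cnt2] := phiS (groupP K) (groupP H) sK sH cC.
have f0H : f0 \in HomF F C H by rewrite inE.
move: (cnt2 f0 f0H) => /eqP/cards1P [f ef].
have : f \in [set f] by rewrite inE.
rewrite -ef inE => /andP [pf /imset2P [a b Na Hb ef']].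
have [Ka Na'] : a \in K /\ a \in 'N(C) by move: Na; rewrite inE => /andP [].
exists C, f; split.
  by rewrite inE /= !groupP sK sH cC pf.
apply/imsetP; exists (b^-1, k * a); first by rewrite inE /= groupV Hb groupM.
rewrite tw_conj /=; apply/setP => -[u v]; apply/imsetP/imsetP.
- case=> c Cc [-> ->].
  have Cc' : c ^ a^-1 \in C by rewrite memJ_norm // groupV.
  have Dd : (c ^ a^-1) ^ k^-1 \in D by rewrite -mem_conjg -eCk.
  exists ((c ^ a^-1) ^ k^-1) => //.
  rewrite ef' ffunE Cc f0E // conjmapE // conjgM !conjgKV; done.
- case=> d Dd [-> ->].
  have Cd : d ^ (k * a) \in C by rewrite conjgM memJ_norm // eCk memJ_conjg.
  exists (d ^ (k * a)) => //.
  rewrite ef' ffunE Cd f0E; last by rewrite memJ_norm // groupV.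
  rewrite conjmapE; last by rewrite memJ_norm // groupV.
  by rewrite conjgM conjgK conjgK.
Qed.

Lemma tw_comp (H J K : {set gT}) (D1 D2 : {set gT}) (t1 t2 : gT -> gT) :
  (forall d, d \in D2 -> t2 d \in D1 -> [/\ t1 (t2 d) \in H, t2 d \in J & d \in K]) ->
  [set q in setX H K | [exists j in J, ((q.1, j) \in tw D1 t1) && ((j, q.2) \in tw D2 t2)]]
  = tw [set d in D2 | t2 d \in D1] (fun d => t1 (t2 d)).
Proof.
move=> hc; apply/setP => -[a b]; rewrite inE; apply/andP/imsetP.
- case=> _ /exists_inP [j Jj /andP [/imsetP [d1 Dd1 [-> ->]] /imsetP [d2 Dd2 [e3 ->]]]].
  by exists d2; [rewrite inE Dd2 -e3 | rewrite e3].
- case=> d; rewrite inE => /andP [Dd2 Dd1] [-> ->].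
  have [h1 h2 h3] := hc d Dd2 Dd1.
  split; first by rewrite inE /= h1 h3.
  apply/exists_inP; exists (t2 d) => //=.
  by apply/andP; split; apply/imsetP; [exists (t2 d) | exists d].
Qed.

Lemma bvec_val (R : comPzRingType) A B C f : (A, B, C, f) \in I ->
  bvec R (A, B, C, f) = [ffun t : cidx gT => if (t.1.1 == B) && (t.1.2 == A)
     then (((t.2 \in tw C f :^: setX B A) : nat)%:R)%R else 0%R].
Proof.
move=> hI; have [gA gB sA sB [cC pf]] := inI hI; have [gC sCA fF] := inI2 hI.
have [F4 _] : (C, f @: C, f) \in F /\ (f @: C, C, Defs.finv C f) \in F.
  by case: fusF => _ _ _ F4; exact: F4 fF.
have [_ gfC _ _ _] := F_tr fusF F4.
rewrite /bvec /wval /basis_word.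
rewrite (_ : path _ _ _ = true); last by rewrite /= !eqxx.
set fC := f @: C.
set GA := Group gA; set GB := Group gB; set GC := Group gC; set GfC := Group gfC.
pose X1 := gen_biset (gval GB, gval GfC, gval GfC, restrict fC id).
pose X2 := gen_biset (gval GfC, gval GC, gval GC, f).
pose X3 := gen_biset (gval GC, gval GA, gval GC, restrict C id).
pose Y := btensor GC X2 X3.
pose X := btensor GfC X1 Y.
transitivity (bclass R B A X); first by [].
apply/ffunP => t; rewrite !ffunE; case: (_ && _) => //; congr (_%:R)%R.
have hf := F_hom fusF fF.
have [_ _ _ _ ihf] := F_tr fusF fF.
have sfCB : fC \subset B by case/and4P: ihf.
have fCf : forall c, c \in C -> f c \in fC by move=> c Cc; apply: imset_f.
have hid1 : hom GfC (restrict fC id) by move=> x y Hx Hy; rewrite (restrictE _ (groupM Hx Hy)) (restrictE _ Hx) (restrictE _ Hy).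
have hid3 : hom GC (restrict C id) by move=> x y Hx Hy; rewrite (restrictE _ (groupM Hx Hy)) (restrictE _ Hx) (restrictE _ Hy).
have g1 : good X1 := good_gen _.
have g2 : good X2 := good_gen _.
have g3 : good X3 := good_gen _.
have gY : good Y := good_tensor _ g2 g3.
have gX : good X := good_tensor _ g1 gY.
pose e1 := cos GfC (restrict fC id) (1, 1).
pose e2 := cos GC f (1, 1).
pose e3 := cos GC (restrict C id) (1, 1).
pose y0 := torb GC (X := X2) (Y := X3) e2 e3.
pose x0 := torb GfC (X := X1) (Y := Y) e1 y0.
have Dx0 : x0 \in bdom X.
  apply: orb_dom; first exact: gen_base_dom.
  apply: orb_dom; exact: gen_base_dom.
have sX2 : forall j, j \in GC -> exists2 a, a \in GfC & @bract _ X2 e2 j = @blact _ X2 a e2.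
  by move=> j Cj; exists (f j); [exact: fCf | exact: (@gen_shift _ GC f hf (gval GfC) (gval GC) j Cj)].
have sX1 : forall j, j \in GfC -> exists2 a, a \in GB & @bract _ X1 e1 j = @blact _ X1 a e1.
  move=> j Cj; exists j; first exact: (subsetP sfCB).
  by rewrite (@gen_shift _ GfC _ hid1 (gval GB) (gval GfC) j Cj) restrictE.
have tY := tensor_trans (H := GfC) (K := GA) g2 g3 (@gen_dom _ GC f GfC GC) (@gen_dom _ GC (restrict C id) GC GA) sX2.
have tX := tensor_trans (H := GB) (K := GA) g1 gY (@gen_dom _ GfC (restrict fC id) GB GfC) tY sX1.
rewrite (nb_trans gX _ Dx0 tX).
have fL1 : forall c, c \in GfC -> restrict fC id c \in GB.
  by move=> c Cc; rewrite restrictE //; apply: (subsetP sfCB).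
have fL2 : forall c, c \in GC -> f c \in GfC by [].
have fL3 : forall c, c \in GC -> restrict C id c \in GC by move=> c Cc; rewrite restrictE.
have eY : bstab GfC GA (X := Y) y0 = tw C f.
  rewrite /y0 (stab_tensor GC g2 g3) (@gen_base _ GC f hf GfC GC fL2 (subxx _)).
  rewrite (@gen_base _ GC (restrict C id) hid3 GC GA fL3 sCA) tw_comp.
  - have -> : [set d in C | restrict C id d \in C] = C.
      by apply/setP => d; rewrite inE; case: (boolP (d \in C)) => // Cd; rewrite restrictE.
    by apply: tw_ext => d Cd /=; rewrite restrictE.
  - move=> d Cd _; rewrite restrictE //; split => //; first exact: fCf.
    exact: (subsetP sCA).
have eX : bstab GB GA (X := X) x0 = tw C f.
  rewrite /x0 (stab_tensor GfC g1 gY) (@gen_base _ GfC (restrict fC id) hid1 GB GfC fL1 (subxx _)).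
  rewrite eY tw_comp.
  - have -> : [set d in C | f d \in fC] = C.
      by apply/setP => d; rewrite inE; case: (boolP (d \in C)) => // Cd; rewrite fCf.
    by apply: tw_ext => d Cd /=; rewrite restrictE // fCf.
  - move=> d Cd fCd; rewrite restrictE //; split => //; first exact: (subsetP sfCB).
    exact: (subsetP sCA).
by rewrite eX.
Qed.
End Main.
Section Main2.
Variables (gT : finGroupType) (S : {group gT}) (F : {set fus_triple gT}).
Variables (crep : {set gT} -> {set {set gT}})
  (phirep : {set gT} -> {set gT} -> {set gT} -> {set {ffun gT -> gT}}).
Hypotheses (fusF : is_fusion_system S F) (crepS : crep_system S crep)
  (phiS : phirep_system S F crep phirep).
Local Notation I := (basis_index S crep phirep).

Lemma F_id (P Q : {group gT}) : P \subset Q -> Q \subset S ->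
  (gval P, gval Q, restrict P id) \in F.
Proof.
move=> sPQ sQS.
have e : conjmap P 1 = restrict P id by apply/ffunP => x; rewrite !ffunE invg1 conjg1.
rewrite -e; apply: (F_conj fusF) => //; first exact: subset_trans sPQ sQS.
by rewrite invg1 conjsg1.
Qed.

Lemma isGen_ok g : isGen S F g -> exists (L Rg C : {group gT}) f,
  [/\ g = (gval L, gval Rg, gval C, f), L \subset S, Rg \subset S, C \subset Rg
    & (gval C, gval L, f) \in F].
Proof.
case=> [[H [K [gH gK sHK sKS ->]]]|[[H [K [gH gK sHK sKS ->]]]|[H [f [hF ->]]]]].
- exists (Group gK), (Group gH), (Group gH), (restrict H id); split => //.
  + exact: subset_trans sHK sKS.
  + exact: (F_id (P := Group gH) (Q := Group gK)).
- exists (Group gH), (Group gK), (Group gH), (restrict H id); split => //.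
  + exact: subset_trans sHK sKS.
  + exact: (F_id (P := Group gH) (Q := Group gH)) (subset_trans sHK sKS).
- have [F4 _] : (H, f @: H, f) \in F /\ (f @: H, H, Defs.finv H f) \in F.
    by case: fusF => _ _ _ F4; exact: F4 hF.
  have [gH gfH sH sfH _] := F_tr fusF F4.
  by exists (Group gfH), (Group gH), (Group gH), f; split.
Qed.

Lemma word_ok g w : (forall g', g' \in g :: w -> isGen S F g') ->
  path (fun g1 g2 => gright g1 == gleft g2) g w ->
  exists (H K : {group gT}), [/\ gleft g = gval H, gright (last g w) = gval K,
     H \subset S /\ K \subset S, good (wbiset g w) & stabF F (gval H) (gval K) (wbiset g w)].
Proof.
elim: w g => [|g' w IH] g gens.
- move=> _; have [L [Rg [C [f [-> sL sR sC hF]]]]] := isGen_ok (gens g (mem_head _ _)).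
  exists L, Rg; split => //; first exact: good_gen.
  exact: (gen_stabF fusF).
- rewrite /= => /andP [/eqP e hp].
  have gens' : forall g'', g'' \in g' :: w -> isGen S F g''.
    by move=> g'' h; apply: gens; rewrite inE h orbT.
  have [H' [K' [eH' eK' [sH' sK'] gW sW]]] := IH g' gens' hp.
  have [L [Rg [C [f [eg sL sR sC hF]]]]] := isGen_ok (gens g (mem_head _ _)).
  subst g; exists L, K'; split => //.
  + exact: good_tensor (good_gen _) gW.
  + have eR : gval H' = gval Rg by rewrite -eH' -e.
    rewrite eR in sW.
    exact: (tensor_stabF fusF (J := Rg) (good_gen _) gW (gen_stabF fusF sL sR sC hF) sW).
Qed.

Lemma bclass_span (R : comPzRingType) (H K : {group gT}) (X : biset gT) :
  H \subset S -> K \subset S -> good X -> stabF F H K X ->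
  bclass R H K X = (\sum_(i in I) (if (i.1.1.2 == gval H) && (i.1.1.1 == gval K)
     then (nb_type H K X (tw i.1.2 i.2))%:R else 0) *: bvec R i)%R.
Proof.
move=> sH sK gX sX; apply/ffunP => t; rewrite sum_ffunE ffunE.
rewrite (eq_bigr (fun i : bidx gT => (if (i.1.1.2 == gval H) && (i.1.1.1 == gval K)
     then (nb_type H K X (tw i.1.2 i.2))%:R else 0) *
   (if (t.1.1 == i.1.1.2) && (t.1.2 == i.1.1.1)
     then ((t.2 \in tw i.1.2 i.2 :^: setX i.1.1.2 i.1.1.1) : nat)%:R else 0))%R); last first.
  by move=> [[[A B] C] f] hi; rewrite ffunE (bvec_val fusF crepS phiS R hi) ffunE.
case hb: ((t.1.1 == gval H) && (t.1.2 == gval K)); last first.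
  rewrite big1 // => i hi.
  case: ifP => [/andP [/eqP -> /eqP ->]|_]; last by rewrite GRing.mul0r.
  by rewrite hb GRing.mulr0.
move/andP: hb => [/eqP e1 /eqP e2].
case: (boolP [exists i in I, ((i.1.1.2 == gval H) && (i.1.1.1 == gval K)) &&
    (t.2 \in tw i.1.2 i.2 :^: setX i.1.1.2 i.1.1.1)]).
- case/exists_inP => i0 hi0 /andP [/andP [/eqP eB /eqP eA] q0].
  rewrite (bigD1 i0) //= big1 ?GRing.addr0.
  + rewrite eB eA !eqxx e1 e2 !eqxx /=.
    move: q0; rewrite eB eA => q0; rewrite q0 GRing.mulr1.
    by rewrite (nb_conj X q0).
  + move=> i /andP [hi ni].
    case: ifP => [/andP [/eqP eB' /eqP eA']|_]; last by rewrite GRing.mul0r.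
    rewrite e1 e2 eB' eA' !eqxx /=.
    case: (boolP (t.2 \in _)) => q; last by rewrite GRing.mulr0.
    exfalso.
    have ei : i = (gval K, gval H, i.1.2, i.2).
      by move: eB' eA'; case: i {hi ni q} => [[[? ?] ?] ?] /= -> ->.
    have ei0 : i0 = (gval K, gval H, i0.1.2, i0.2).
      by move: eB eA; case: i0 {hi0 q0 ni} => [[[? ?] ?] ?] /= -> ->.
    have h : tw i.1.2 i.2 \in tw i0.1.2 i0.2 :^: setX H K.
      move: q0; rewrite eB eA => q0.
      by rewrite -(@conj_class _ (setX_group H K) _ _ _ q0); apply: conj_sym.
    rewrite ei in hi; rewrite ei0 in hi0.
    have [eC ef] := uniq_idx fusF crepS phiS hi hi0 h.
    by move: ni; rewrite ei ei0 eC ef eqxx.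
- move=> hnone; rewrite big1.
  + case: (eqVneq (nb_type H K X t.2) 0) => [-> //|nz].
    exfalso; have [x Dx ht] := nb_nz gX nz.
    have [D [th [hF es]]] := sX x Dx.
    have sDK : D \subset K.
      apply/subsetP => d Dd; have : (th d, d) \in bstab H K x by rewrite es; apply: imset_f.
      by case/bstab_sub.
    have [C [f [hI hc]]] := rep_idx fusF crepS phiS sH sK hF sDK.
    move/negP: hnone; apply; apply/exists_inP; exists (gval K, gval H, C, f) => //=.
    rewrite !eqxx /= (@conj_class _ (setX_group H K) _ _ _ hc); by rewrite -es.
  + move=> i hi.
    case: ifP => [/andP [/eqP eB /eqP eA]|_]; last by rewrite GRing.mul0r.
    rewrite e1 e2 eB eA !eqxx /=.
    case: (boolP (t.2 \in _)) => q; last by rewrite GRing.mulr0.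
    exfalso; move/negP: hnone; apply; apply/exists_inP; exists i => //.
    by rewrite eB eA !eqxx.
Qed.
End Main2.

Unset Implicit Arguments.
Local Open Scope ring_scope.

Lemma scE (R : comPzRingType) (a : R) (x : R^o) : a *: x = a * x.
Proof. by []. Qed.

Theorem proposition2p24 (gT : finGroupType) (p : nat) (S : {group gT})
    (F : {set fus_triple gT}) (R : comPzRingType)
    (crep : {set gT} -> {set {set gT}})
    (phirep : {set gT} -> {set gT} -> {set gT} -> {set {ffun gT -> gT}}) :
  prime p -> (p.-group S)%g -> is_fusion_system S F -> saturated p S F ->
  crep_system S crep -> phirep_system S F crep phirep ->
  let I := basis_index S crep phirep in
  [/\ (forall i, i \in I -> in_mu S F (bvec R i)),
      (forall c : bidx gT -> R, \sum_(i in I) c i *: bvec R i = 0 ->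
         forall i, i \in I -> c i = 0),
      (forall v, in_mu S F v -> exists c : bidx gT -> R, v = \sum_(i in I) c i *: bvec R i) &
      (exists n (g : 'I_n -> coordT gT R), (forall k, in_mu S F (g k)) /\
         forall v, in_mu S F v -> exists c : 'I_n -> R, v = \sum_k c k *: g k)].
Proof.
move=> pP pS fusF satF crepS phiS I.
have mu_b : forall i, i \in I -> in_mu S F (bvec R i).
  move=> [[[A B] C] f] hi.
  have [gA gB sA sB [cC pf]] := inI hi; have [gC sCA fF] := inI2 crepS phiS hi.
  have [F4 _] : (C, f @: C, f) \in F /\ (f @: C, C, Defs.finv C f) \in F.
    by case: fusF => _ _ _ F4; exact: F4 fF.
  have [_ gfC _ _ _] := F_tr fusF F4.
  have [_ _ _ _ ihf] := F_tr fusF fF.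
  have sfCB : f @: C \subset B by case/and4P: ihf.
  exists [:: (1, basis_word (A, B, C, f))]; split.
  - move=> q g; rewrite inE => /eqP -> /=; rewrite !inE => /or3P [] /eqP ->.
    + by left; exists (f @: C), B; split.
    + by right; right; exists C, f; split.
    + by right; left; exists C, A; split.
  - by rewrite big_seq1 scale1r.
have indep : forall c : bidx gT -> R, \sum_(i in I) c i *: bvec R i = 0 ->
    forall i, i \in I -> c i = 0.
  move=> c hs [[[A B] C] f] hi.
  have [gA gB _ _ _] := inI hi.
  have := congr1 (fun v : {ffun cidx gT -> R^o} => v ((B, A), tw C f)) hs.
  rewrite sum_ffunE ffunE (bigD1 (A, B, C, f)) //= big1.
  + rewrite ffunE (bvec_val fusF crepS phiS R hi) ffunE /= !eqxx /=.
    rewrite (_ : (tw C f \in _) = true); last exact: (conj_refl (setX_group (Group gB) (Group gA))).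
    by rewrite scE mulr1 addr0.
  + move=> [[[A1 B1] C1] f1] /andP [hi1 ne]; rewrite ffunE (bvec_val fusF crepS phiS R hi1) ffunE /= scE.
    case: ifP => [/andP [/eqP eB /eqP eA]|_]; last by rewrite mulr0.
    subst B1 A1; case q: (tw C f \in _); last by rewrite mulr0.
    have [eC ef] := uniq_idx fusF crepS phiS hi hi1 q.
    by move: ne; rewrite eC ef eqxx.
have wany : forall w, (forall g, g \in w -> isGen S F g) ->
    exists c : bidx gT -> R, wval R w = \sum_(i in I) c i *: bvec R i.
  case=> [|g w] gens.
  - by exists (fun _ => 0); rewrite big1 // => i _; rewrite scale0r.
  - rewrite /wval; case: ifP => hp.
    + have [H [K [eH eK [sH sK] gX sX]]] := word_ok fusF gens hp.
      rewrite eH eK (bclass_span fusF crepS phiS R sH sK gX sX).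
      by eexists.
    + by exists (fun _ => 0); rewrite big1 // => i _; rewrite scale0r.
have span : forall v, in_mu S F v -> exists c : bidx gT -> R, v = \sum_(i in I) c i *: bvec R i.
  move=> v [s [gens ->]]; elim: s gens => [|q s IH] gens.
  - by exists (fun _ => 0); rewrite big_nil big1 // => i _; rewrite scale0r.
  - have [c1 e1] := wany q.2 (fun g hg => gens q g (mem_head _ _) hg).
    have gens' : forall q' g, q' \in s -> g \in q'.2 -> isGen S F g.
      by move=> q' g hq hg; apply: (gens q' g) => //; rewrite inE hq orbT.
    have [c2 e2] := IH gens'.
    exists (fun i => q.1 * c1 i + c2 i).
    rewrite big_cons e1 e2 scaler_sumr -big_split /=; apply: eq_bigr => i _.
    by rewrite scalerDl scalerA.
split => //.
exists #|I|, (fun k => bvec R (enum_val k)); split.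
- by move=> k; apply: mu_b; exact: enum_valP.
- move=> v /span [c ->]; exists (fun k => c (enum_val k)).
  by rewrite big_enum_val.
Qed.
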